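(* Assume (A1). Let $g:\mathcal X\to\mathbb R$ and let $u$ be the solution of problem (P) with boundary data $g|_\Gamma$. For $x\in\mathcal X$ let $(X_i)_{i\ge0}$ be the stochastic process started at $X_0=x$ defined as follows: given $X_i$, if $X_i\in\Gamma$ set $X_{i+1}=X_i$; otherwise, independently of everything else, with probability $\alpha$ take $X_{i+1}=y$ with probability $w_{X_iy}/d_{X_i}$, with probability $\frac12(1-\alpha)$ take $X_{i+1}\in\operatorname{argmax}_{y\in N_{X_i}}u(y)$, and with probability $\frac12(1-\alpha)$ take $X_{i+1}\in\operatorname{argmin}_{y\in N_{X_i}\cap\Gamma}g(y)$. Let $\tau=\inf\{i\ge0: X_i\in\Gamma\}$. Then $$u(x)-g(x)\le\mathbb E\big[g(X_\tau)-g(x)\mid X_0=x\big].$$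
   Context: $\mathcal X$ is a finite vertex set and $W=(w_{xy})$ a symmetric matrix of nonnegative weights defining a connected graph, with degrees $d_x=\sum_{y}w_{xy}$ and neighbor sets $N_x=\{y\in\mathcal X:w_{xy}>0\}$. For $p\ge2$, $\alpha=1/(p-1)$, and $$\mathcal L_p u(x)=\alpha\,\frac{1}{d_x}\sum_{y}w_{xy}\big(u(x)-u(y)\big)+(1-\alpha)\Big(u(x)-\tfrac12\big(\max_{N_x}u+\min_{N_x}u\big)\Big).$$ $\Gamma\subset\mathcal X$ is the set of labeled vertices. Problem (P): find $u:\mathcal X\to\mathbb R$ with $\mathcal L_pu(x)=0$ for $x\in\mathcal X\setminus\Gamma$ and $u=g$ on $\Gamma$; since the graph is connected it has a unique solution. Assumption (A1): $\Gamma\cap N_x\neq\varnothing$ for every $x\in\mathcal X$. *)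

(* Defs.v *)
From HB Require Import structures.
From mathcomp Require Import all_boot all_order all_algebra.
From mathcomp Require Import all_classical all_reals all_analysis.
Set Implicit Arguments. Unset Strict Implicit. Unset Printing Implicit Defensive.
Import Order.TTheory GRing.Theory Num.Theory.
Local Open Scope ring_scope.

Section Graph.
Variables (R : realType) (T : finType) (W : T -> T -> R).

Definition deg (x : T) : R := \sum_(y : T) W x y.

Definition nbrs (x : T) : {set T} := [set y | 0 < W x y].

Definition weighted_connected_graph : Prop :=
  [/\ forall x y, W x y = W y x,
      forall x y, 0 <= W x y &
      forall x y, connect [rel a b | 0 < W a b] x y].

(* max_{N_x} u and min_{N_x} u (seeded with an element of N_x when nonempty) *)
Definition maxN (u : T -> R) (x : T) : R :=
  \big[Num.max/u (odflt x [pick y in nbrs x])]_(y in nbrs x) u y.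
Definition minN (u : T -> R) (x : T) : R :=
  \big[Num.min/u (odflt x [pick y in nbrs x])]_(y in nbrs x) u y.

Definition Lp (p : R) (u : T -> R) (x : T) : R :=
  let alpha := 1 / (p - 1) in
  alpha * ((deg x)^-1 * \sum_(y : T) W x y * (u x - u y))
  + (1 - alpha) * (u x - (maxN u x + minN u x) / 2).

Definition solves_P (p : R) (Gamma : {set T}) (g u : T -> R) : Prop :=
  (forall x, x \notin Gamma -> Lp p u x = 0) /\
  (forall x, x \in Gamma -> u x = g x).

Definition A1 (Gamma : {set T}) : Prop :=
  forall x, exists y, y \in Gamma :&: nbrs x.

(* One-step transition probabilities of the process, given selections
   a x in argmax_{N_x} u and b x in argmin_{N_x cap Gamma} g. *)
Definition trans (p : R) (Gamma : {set T}) (a b : T -> T) (x y : T) : R :=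
  let alpha := 1 / (p - 1) in
  if x \in Gamma then (x == y)%:R
  else alpha * (W x y / deg x)
       + (1 - alpha) / 2 * (y == a x)%:R
       + (1 - alpha) / 2 * (y == b x)%:R.

(* probability that (X_0, ..., X_n) = s, given X_0 = x *)
Definition path_prob (p : R) (Gamma : {set T}) (a b : T -> T) (x : T)
    (n : nat) (s : {ffun 'I_n.+1 -> T}) : R :=
  (s ord0 == x)%:R *
  \prod_(i < n) trans p Gamma a b (s (widen_ord (leqnSn n) i)) (s (lift ord0 i)).

(* g(X_tau) * 1_{tau <= n} evaluated on the path s (tau = first hitting time of Gamma) *)
Definition stopped_value (Gamma : {set T}) (g : T -> R) (x : T)
    (n : nat) (s : {ffun 'I_n.+1 -> T}) : R :=
  let l := [seq s i | i <- enum 'I_n.+1] in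
  let inG := fun y : T => y \in Gamma in
  if has inG l then g (nth x l (find inG l)) else 0.

Definition stopped_exp (p : R) (Gamma : {set T}) (a b : T -> T) (g : T -> R)
    (x : T) (n : nat) : R :=
  \sum_(s : {ffun 'I_n.+1 -> T})
     path_prob p Gamma a b x s * stopped_value Gamma g x s.

End Graph.

(* Main.v *)
Require Import Defs.
From HB Require Import structures.
From mathcomp Require Import all_boot all_order all_algebra.
From mathcomp Require Import all_classical all_reals all_analysis.
From mathcomp Require Import ring lra.
Import Order.TTheory GRing.Theory Num.Theory.
Import numFieldNormedType.Exports.
Local Open Scope classical_set_scope.
Local Open Scope ring_scope.
Set Implicit Arguments. Unset Strict Implicit. Unset Printing Implicit Defensive.

Definition ftail (T : finType) n (s : {ffun 'I_n.+2 -> T}) : {ffun 'I_n.+1 -> T} :=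
  [ffun j => s (lift ord0 j)].
Definition fcons (T : finType) n (y : T) (t : {ffun 'I_n.+1 -> T}) : {ffun 'I_n.+2 -> T} :=
  [ffun i => if unlift ord0 i is Some j then t j else y].

Lemma ftail_fcons (T : finType) n (y : T) (t : {ffun 'I_n.+1 -> T}) : ftail (fcons y t) = t.
Proof. by apply/ffunP => j; rewrite !ffunE liftK. Qed.

Lemma fcons_ftail (T : finType) n (s : {ffun 'I_n.+2 -> T}) : fcons (s ord0) (ftail s) = s.
Proof.
apply/ffunP => i; rewrite !ffunE.
by case: unliftP => [j ->|->]; rewrite ?ffunE.
Qed.

Lemma fcons0 (T : finType) n (y : T) (t : {ffun 'I_n.+1 -> T}) : fcons y t ord0 = y.
Proof. by rewrite ffunE unlift_none. Qed.

Lemma fconsS (T : finType) n (y : T) (t : {ffun 'I_n.+1 -> T}) j : fcons y t (lift ord0 j) = t j.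
Proof. by rewrite ffunE liftK. Qed.

Lemma path_prob_cons (R : realType) (T : finType) (W : T -> T -> R) p Gamma a b x n y
   (t : {ffun 'I_n.+1 -> T}) :
  path_prob W p Gamma a b x (fcons y t) =
  (y == x)%:R * trans W p Gamma a b y (t ord0) *
  \prod_(i < n) trans W p Gamma a b (t (widen_ord (leqnSn n) i)) (t (lift ord0 i)).
Proof.
rewrite /path_prob big_ord_recl fcons0 -mulrA; congr (_ * (_ * _)).
  have -> : widen_ord (leqnSn n.+1) ord0 = ord0 :> 'I_n.+2 by apply: val_inj.
  by rewrite fcons0 fconsS.
apply: eq_bigr => i _.
have -> : widen_ord (leqnSn n.+1) (lift ord0 i) = lift ord0 (widen_ord (leqnSn n) i)
  by apply: val_inj.
by rewrite !fconsS.
Qed.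

Lemma decomp (R : realType) (T : finType) (W : T -> T -> R) p Gamma a b x n
   (F : T -> {ffun 'I_n.+1 -> T} -> R) :
  \sum_(s : {ffun 'I_n.+2 -> T}) path_prob W p Gamma a b x s * F (s ord0) (ftail s) =
  \sum_(y : T) trans W p Gamma a b x y *
     \sum_(t : {ffun 'I_n.+1 -> T}) path_prob W p Gamma a b y t * F x t.
Proof.
rewrite (reindex (fun q : T * {ffun 'I_n.+1 -> T} => fcons q.1 q.2)) /=; last first.
  by exists (fun s : {ffun 'I_n.+2 -> T} => (s ord0, ftail s)) => [[y t] _|s _]; rewrite /= ?fcons0 ?ftail_fcons ?fcons_ftail.
rewrite -(pair_big predT predT (fun y t => path_prob W p Gamma a b x (fcons y t) * F (fcons y t ord0) (ftail (fcons y t)))) /=.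
rewrite (bigD1 x) //= [X in _ + X]big1 ?addr0; last first.
  by move=> y /negPf yx; apply: big1 => t _; rewrite path_prob_cons yx !mul0r.
under eq_bigr => t _ do rewrite path_prob_cons eqxx mul1r fcons0 ftail_fcons.
symmetry; under eq_bigr => y _ do rewrite big_distrr /=.
rewrite exchange_big /=. symmetry.
apply: eq_bigr => t _.
rewrite (bigD1 (t ord0)) //= [X in _ + X]big1 ?addr0; last first.
  by move=> y /negPf yx; rewrite /path_prob eq_sym yx !mul0r mulr0.
by rewrite /path_prob eqxx mul1r mulrA.
Qed.

Lemma sv_cons (R : realType) (T : finType) (Gamma : {set T}) (g : T -> R) (x : T) n
  (s : {ffun 'I_n.+2 -> T}) :
  stopped_value Gamma g x s =
  if s ord0 \in Gamma then g (s ord0) else stopped_value Gamma g (s ord0) (ftail s).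
Proof.
rewrite /stopped_value.
have -> : [seq s i | i <- enum 'I_n.+2] = s ord0 :: [seq ftail s j | j <- enum 'I_n.+1].
  by rewrite enum_ordSl /= -map_comp; congr (_ :: _); apply: eq_map => j; rewrite /= ffunE.
rewrite /= ; case: (s ord0 \in Gamma) => //=.
case H: (has _ _) => //.
by congr (g _); apply: set_nth_default; rewrite -has_find.
Qed.

Lemma sv_def (R : realType) (T : finType) (Gamma : {set T}) (g : T -> R) (x y : T) n
  (s : {ffun 'I_n.+1 -> T}) :
  stopped_value Gamma g x s = stopped_value Gamma g y s.
Proof.
rewrite /stopped_value; case H: (has _ _) => //.
by congr (g _); apply: set_nth_default; rewrite -has_find.
Qed.

Lemma sum_ffun1 (R : realType) (T : finType) (x : T) (F : T -> R) :
  \sum_(s : {ffun 'I_1 -> T}) (s ord0 == x)%:R * F (s ord0) = F x.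
Proof.
rewrite (bigD1 [ffun=> x]) //= ffunE eqxx mul1r big1 ?addr0 // => s Hs.
case E: (s ord0 == x); last by rewrite mul0r.
case/negP: Hs; apply/eqP/ffunP => i; rewrite ffunE (eqP (_ : i == ord0)) ?(eqP E) //.
by rewrite -val_eqE /=; case: i => [[]].
Qed.

Lemma pp_sum (R : realType) (T : finType) (W : T -> T -> R) p Gamma a b :
  (forall x, \sum_y trans W p Gamma a b x y = 1) ->
  forall n x, \sum_(t : {ffun 'I_n.+1 -> T}) path_prob W p Gamma a b x t = 1.
Proof.
move=> Hs; elim=> [|n IH] x.
  rewrite -[RHS](sum_ffun1 x (fun _ => 1)); apply: eq_bigr => s _.
  by rewrite /path_prob big_ord0 !mulr1.
rewrite -[RHS](Hs x).
have H := decomp W p Gamma a b x (fun _ _ => 1); rewrite /= in H.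
under eq_bigr do rewrite -[path_prob _ _ _ _ _ _ _]mulr1.
rewrite H; apply: eq_bigr => y _.
by under eq_bigr do rewrite mulr1; rewrite IH mulr1.
Qed.

Lemma V0 (R : realType) (T : finType) (W : T -> T -> R) p Gamma a b g x :
  stopped_exp W p Gamma a b g x 0 = if x \in Gamma then g x else 0.
Proof.
rewrite /stopped_exp -[RHS](sum_ffun1 x (fun y => if y \in Gamma then g y else 0)).
apply: eq_bigr => s _; rewrite /path_prob big_ord0 mulr1; congr (_ * _).
rewrite /stopped_value /= enum_ordSl enum_ord0 /=.
by case: (s ord0 \in Gamma).
Qed.

Lemma Vstep (R : realType) (T : finType) (W : T -> T -> R) p Gamma a b g x n :
  (forall x, \sum_y trans W p Gamma a b x y = 1) ->
  stopped_exp W p Gamma a b g x n.+1 =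
  if x \in Gamma then g x else \sum_y trans W p Gamma a b x y * stopped_exp W p Gamma a b g y n.
Proof.
move=> Hs; rewrite /stopped_exp.
under eq_bigr do rewrite sv_cons.
rewrite (decomp W p Gamma a b x (fun y t => if y \in Gamma then g y else stopped_value Gamma g y t)).
case: (x \in Gamma).
  under eq_bigr do rewrite -big_distrl /= (pp_sum Hs) mul1r.
  by rewrite -big_distrl /= Hs mul1r.
apply: eq_bigr => y _; congr (_ * _); apply: eq_bigr => t _.
by rewrite (sv_def Gamma g x y).
Qed.

Lemma contraction (R : realType) (T : finType) (Gamma : {set T}) (tr : T -> T -> R)
  (b : T -> T) (q : R) (f : nat -> T -> R) :
  (forall x y, 0 <= tr x y) -> (forall x, \sum_y tr x y = 1) ->
  (forall x, x \notin Gamma -> b x \in Gamma) ->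
  (forall x, x \notin Gamma -> 1 - tr x (b x) <= q) -> 0 <= q ->
  (forall x, x \in Gamma -> f 0%N x = 0) ->
  (forall n x, f n.+1 x = if x \in Gamma then 0 else \sum_y tr x y * f n y) ->
  forall n x, `|f n x| <= (\sum_y `|f 0%N y|) * q ^+ n.
Proof.
move=> tr0 tr1 bG bq q0 f0 fS.
have fG : forall n x, x \in Gamma -> f n x = 0.
  by case=> [|n] x xG; [exact: f0 | rewrite fS xG].
set M := \sum_y `|f 0%N y|.
have M0 : 0 <= M by apply: sumr_ge0.
elim=> [|n IH] x.
  rewrite expr0 mulr1 /M (bigD1 x) //= lerDl; exact: sumr_ge0.
rewrite fS; case: ifP => xG; first by rewrite normr0 mulr_ge0 // exprn_ge0.
apply: le_trans (ler_norm_sum _ _ _) _.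
rewrite (bigD1 (b x)) //= normrM (fG _ _ (bG _ (negbT xG))) normr0 mulr0 add0r.
apply: (@le_trans _ _ (\sum_(y | y != b x) tr x y * (M * q ^+ n))).
  apply: ler_sum => y _; rewrite normrM ger0_norm //; exact: ler_wpM2l.
rewrite -big_distrl /=.
have -> : \sum_(y | y != b x) tr x y = 1 - tr x (b x).
  by rewrite -(tr1 x) [in RHS](bigD1 (b x)) //= addrC addrK.
rewrite exprS mulrCA; apply: ler_wpM2l => //; apply: ler_wpM2r; first exact: exprn_ge0.
exact: bq (negbT xG).
Qed.

Lemma alpha_bounds (R : realType) (p : R) : 2 <= p -> 0 < 1 / (p - 1) <= 1.
Proof.
move=> Hp; have p1 : 1 <= p - 1 by rewrite lerBrDr.
apply/andP; split; first by rewrite divr_gt0 // (lt_le_trans ltr01).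
by rewrite ler_pdivrMr ?mul1r // (lt_le_trans ltr01).
Qed.

Lemma deg_gt0 (R : realType) (T : finType) (W : T -> T -> R) (x y : T) :
  (forall x y, 0 <= W x y) -> y \in nbrs W x -> 0 < deg W x.
Proof.
move=> Hw; rewrite inE => Hy; rewrite /deg (bigD1 y) //=.
by apply: (lt_le_trans Hy); rewrite lerDl; apply: sumr_ge0.
Qed.

Lemma trans_ge0 (R : realType) (T : finType) (W : T -> T -> R) (p : R) (Gamma : {set T}) (a b : T -> T) (x y : T) :
  (forall x y, 0 <= W x y) -> 2 <= p ->
  (forall z, z \notin Gamma -> b z \in nbrs W z :&: Gamma) ->
  0 <= trans W p Gamma a b x y.
Proof.
move=> Hw Hp Hb; rewrite /trans; case: ifP => xG //.
have /andP[a0 a1] := alpha_bounds Hp.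
have d0 : 0 < deg W x.
  by apply: (@deg_gt0 _ _ W x (b x)) => //; have := Hb x (negbT xG); rewrite inE => /andP[].
set al := 1 / (p - 1) in a0 a1 *.
have c0 : 0 <= (1 - al) / 2 by rewrite divr_ge0 // subr_ge0.
repeat apply: addr_ge0; apply: mulr_ge0 => //. all: try exact: ltW. all: try exact: ler0n. by rewrite divr_ge0 // ltW.
Qed.

Lemma trans_sum (R : realType) (T : finType) (W : T -> T -> R) (p : R) (Gamma : {set T}) (a b : T -> T) (x : T) :
  (forall x y, 0 <= W x y) ->
  (forall z, z \notin Gamma -> b z \in nbrs W z :&: Gamma) ->
  \sum_y trans W p Gamma a b x y = 1.
Proof.
move=> Hw Hb; rewrite /trans; case: (boolP (x \in Gamma)) => xG.
  rewrite (bigD1 x) //= eqxx big1 ?addr0 // => y /negPf; rewrite eq_sym => ->.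
  by [].

have d0 : 0 < deg W x.
  by apply: (@deg_gt0 _ _ W x (b x)) => //; have := Hb x xG; rewrite inE => /andP[].
rewrite !big_split /= -!big_distrr /= -mulr_suml -/(deg W x) divff ?gt_eqF //.
rewrite (bigD1 (a x)) //= eqxx big1 ?addr0; last by move=> y /negPf ->.
rewrite (bigD1 (b x)) //= eqxx big1 ?addr0; last by move=> y /negPf ->.
set al := 1 / (p - 1); rewrite !mulr1; lra.
Qed.

Lemma trans_b (R : realType) (T : finType) (W : T -> T -> R) (p : R) (Gamma : {set T}) (a b : T -> T) (x : T) :
  (forall x y, 0 <= W x y) -> 2 <= p ->
  (forall z, z \notin Gamma -> b z \in nbrs W z :&: Gamma) ->
  x \notin Gamma -> 0 < trans W p Gamma a b x (b x).
Proof.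
move=> Hw Hp Hb xG.
have /andP[a0 a1] := alpha_bounds Hp.
have := Hb x xG; rewrite !inE => /andP[Wb _].
have d0 : 0 < deg W x by apply: (@deg_gt0 _ _ W x (b x)) => //; rewrite inE.
rewrite /trans (negbTE xG).
set al := 1 / (p - 1) in a0 a1 *.
have c0 : 0 <= (1 - al) / 2 by rewrite divr_ge0 // subr_ge0.
rewrite -addrA ltr_pwDl //; first by rewrite mulr_gt0 // divr_gt0.
by rewrite addr_ge0 // mulr_ge0.
Qed.

Lemma sum_ind (R : realType) (T : finType) (c : R) (z : T) (u : T -> R) :
  \sum_i c * (i == z)%:R * u i = c * u z.
Proof.
rewrite (bigD1 z) //= eqxx mulr1 big1 ?addr0 // => y /negPf ->.
by rewrite mulr0 mul0r.
Qed.

Lemma submart (R : realType) (T : finType) (W : T -> T -> R) (p : R) (Gamma : {set T})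
  (g u : T -> R) (a b : T -> T) (x : T) :
  (forall x y, 0 <= W x y) -> 2 <= p -> solves_P W p Gamma g u ->
  (forall z, z \notin Gamma ->
     a z \in nbrs W z /\ (forall y, y \in nbrs W z -> u y <= u (a z))) ->
  (forall z, z \notin Gamma -> b z \in nbrs W z :&: Gamma) ->
  x \notin Gamma -> u x <= \sum_y trans W p Gamma a b x y * u y.
Proof.
move=> Hw Hp [HL _] Ha Hb xG.
have /andP[a0 a1] := alpha_bounds Hp.
have [aN amax] := Ha x xG.
have := Hb x xG; rewrite inE => /andP[bN _].
have d0 : 0 < deg W x by apply: (@deg_gt0 _ _ W x (b x)).
have HM : maxN W u x <= u (a x).
  rewrite /maxN; apply: (big_ind (fun v => v <= u (a x))) => //.
    case: pickP => [y Hy|none] /=; first exact: amax.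
    by move: (none (a x)); rewrite aN.
  by move=> v w Hv Hw'; rewrite ge_max Hv Hw'.
have Hm : minN W u x <= u (b x).
  by rewrite /minN (bigD1 (b x)) //= ge_min lexx.
have := HL x xG; rewrite /Lp.
set al := 1 / (p - 1) in a0 a1 *.
have -> : \sum_y W x y * (u x - u y) = deg W x * u x - \sum_y W x y * u y.
  by rewrite /deg mulr_suml -sumrB; apply: eq_bigr => y _; rewrite mulrBr.
rewrite mulrBr mulKf ?gt_eqF // => HL0.
rewrite /trans (negbTE xG) -/al.
under eq_bigr do rewrite mulrDl mulrDl.
rewrite !big_split /=.
rewrite !sum_ind.
have -> : \sum_y al * (W x y / deg W x) * u y = al * ((deg W x)^-1 * \sum_y W x y * u y).
  rewrite mulr_sumr mulr_sumr; apply: eq_bigr => y _; ring.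
set X := (deg W x)^-1 * _ in HL0 *.
have h1 : 0 <= (1 - al) * (u (a x) - maxN W u x) by rewrite mulr_ge0 // subr_ge0.
have h2 : 0 <= (1 - al) * (u (b x) - minN W u x) by rewrite mulr_ge0 // subr_ge0.
nra.
Qed.

Fixpoint Sseq (R : realType) (T : finType) (Gamma : {set T}) (tr : T -> T -> R)
  (u : T -> R) (n : nat) (y : T) : R :=
  if n is m.+1 then (if y \in Gamma then u y else \sum_z tr y z * Sseq Gamma tr u m z)
  else u y.

Theorem mainTheorem3 (R : realType) (T : finType) (W : T -> T -> R)
    (p : R) (Gamma : {set T}) (g u : T -> R) (a b : T -> T) (x : T) :
  weighted_connected_graph W ->
  2 <= p ->
  A1 W Gamma ->
  solves_P W p Gamma g u ->
  (* a x is an element of argmax_{y in N_x} u(y) *)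
  (forall z, z \notin Gamma ->
     a z \in nbrs W z /\ (forall y, y \in nbrs W z -> u y <= u (a z))) ->
  (* b x is an element of argmin_{y in N_x cap Gamma} g(y) *)
  (forall z, z \notin Gamma ->
     b z \in nbrs W z :&: Gamma /\
     (forall y, y \in nbrs W z :&: Gamma -> g (b z) <= g y)) ->
  exists l : R,
    stopped_exp W p Gamma a b g x @ \oo --> l /\
    u x - g x <= l - g x.
Proof.
move=> [_ Hw _] Hp _ HP Ha Hb.
have Hb' : forall z, z \notin Gamma -> b z \in nbrs W z :&: Gamma := fun z h => (Hb z h).1.
have tr0 : forall x y, 0 <= trans W p Gamma a b x y.
  by move=> y z; apply: trans_ge0.
have tr1 : forall x, \sum_y trans W p Gamma a b x y = 1.
  by move=> y; apply: trans_sum.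
have bG : forall x, x \notin Gamma -> b x \in Gamma.
  by move=> y /Hb'; rewrite inE => /andP[].
set q := \big[Num.max/0]_(z | z \notin Gamma) (1 - trans W p Gamma a b z (b z)).
have q0 : 0 <= q.
  apply: (big_ind (fun v => 0 <= v)) => //; first by move=> v w hv hw; rewrite le_max hv.
  move=> v _; rewrite subr_ge0 -(tr1 v) (bigD1 (b v)) //= lerDl.
  exact: sumr_ge0.
have bq : forall z, z \notin Gamma -> 1 - trans W p Gamma a b z (b z) <= q.
  by move=> z zG; rewrite /q (bigD1 z) //= le_max lexx.
have q1 : q < 1.
  apply: (big_ind (fun v => v < 1)) => //; first by move=> v w hv hw; rewrite gt_max hv hw.
  move=> z zG; rewrite ltrBlDr ltrDl; exact: trans_b.
set V := fun n y => stopped_exp W p Gamma a b g y n.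
have VS : forall n y, V n.+1 y =
    if y \in Gamma then g y else \sum_z trans W p Gamma a b y z * V n z.
  by move=> n y; rewrite /V Vstep.
have V0' : forall y, V 0%N y = if y \in Gamma then g y else 0.
  by move=> y; rewrite /V V0.
set D := fun n y => V n.+1 y - V n y.
have HD := @contraction R T Gamma _ b q D tr0 tr1 bG bq q0.
have {}HD : forall n y, `|D n y| <= (\sum_y `|D 0%N y|) * q ^+ n.
  apply: HD.
    by move=> y yG; rewrite /D VS V0' yG subrr.
  move=> n y; rewrite /D VS [V n.+1 y]VS; case: ifP => _; first by rewrite subrr.
  by rewrite -sumrB; apply: eq_bigr => z _; rewrite mulrBr.
set MD := \sum_y `|D 0%N y|.
have MD0 : 0 <= MD by apply: sumr_ge0.
set G := \sum_y `|g y|.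
have gG : forall y, `|g y| <= G.
  by move=> y; rewrite /G (bigD1 y) //= lerDl; apply: sumr_ge0.
have G0 : 0 <= G by apply: sumr_ge0.
have HV : forall n y, `|V n y| <= G.
  elim=> [|n IH] y; first by rewrite V0'; case: ifP => _; rewrite ?normr0.
  rewrite VS; case: ifP => _ //.
  apply: le_trans (ler_norm_sum _ _ _) _.
  rewrite -[G]mul1r -(tr1 y) mulr_suml; apply: ler_sum => z _.
  by rewrite normrM ger0_norm //; apply: ler_wpM2l.
set K := MD / (1 - q).
have q1' : 0 < 1 - q by rewrite subr_gt0.
have K0 : 0 <= K by rewrite divr_ge0 // ltW.
have KMD : K * (1 - q) = MD by rewrite /K divfK // gt_eqF.
set A := fun n => V n x + K * q ^+ n.
have Adec : forall n, A n.+1 <= A n.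
  move=> n; rewrite /A.
  have e : K * q ^+ n.+1 = K * q ^+ n - MD * q ^+ n.
    by rewrite -KMD exprS; ring.
  rewrite e.
  have := HD n x; rewrite /D => h.
  have h' : V n.+1 x - V n x <= MD * q ^+ n := le_trans (ler_norm _) h.
  lra.
have Alb : has_lbound (range A).
  exists (- G) => _ [n _ <-]; rewrite /A.
  have := HV n x; rewrite ler_norml => /andP[h _].
  have : 0 <= K * q ^+ n by rewrite mulr_ge0 // exprn_ge0.
  lra.
have cA := nonincreasing_is_cvgn (proj1 (nonincreasing_seqP A) Adec) Alb.
have cq : (fun n => q ^+ n) @ \oo --> 0.
  by apply: cvg_expr; rewrite ger0_norm.
have cKq : (fun n => K * q ^+ n) @ \oo --> K * 0 by apply: cvgMr.
have cV : cvg ((fun n => V n x) @ \oo).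
  have -> : (fun n => V n x) = (fun n => A n - K * q ^+ n).
    by apply: funext => n; rewrite /A addrK.
  by apply: is_cvgB => //; apply: cvgP cKq.
set l := lim ((fun n => V n x) @ \oo).
exists l; split; first exact: cV.
set S := Sseq Gamma (trans W p Gamma a b) u.
set E := fun n y => S n y - V n y.
have HE := @contraction R T Gamma _ b q E tr0 tr1 bG bq q0.
have {}HE : forall n y, `|E n y| <= (\sum_y `|E 0%N y|) * q ^+ n.
  apply: HE.
    by move=> y yG; rewrite /E V0' yG /S /= HP.2 // subrr.
  move=> n y; rewrite /E VS /S /=; case: ifP => yG; first by rewrite HP.2 // subrr.
  by rewrite -sumrB; apply: eq_bigr => z _; rewrite mulrBr.
set ME := \sum_y `|E 0%N y|.
have HS : forall n y, u y <= S n y.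
  elim=> [|n IH] y; first by rewrite /S /=.
  rewrite /S /=; case: ifP => yG //.
  apply: le_trans (submart Hw Hp HP Ha Hb' (negbT yG)) _.
  by apply: ler_sum => z _; apply: ler_wpM2l.
have Hux : forall n, u x <= V n x + ME * q ^+ n.
  move=> n; have := HE n x; rewrite /E => h.
  have := HS n x; have := le_trans (ler_norm _) h; rewrite /ME; lra.
have cW : (fun n => V n x + ME * q ^+ n) @ \oo --> l + ME * 0.
  by apply: cvgD; [exact: cV | apply: cvgMr].
rewrite lerD2r mulr0 addr0 in cW *.
have -> : l = lim ((fun n => V n x + ME * q ^+ n) @ \oo).
  by apply/esym/cvg_lim.
apply: limr_ge; first exact: cvgP cW.
exact: nearW.
Qed.
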